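(* Let $Q$ be a finite simply connected latin quandle and $\alpha$ a congruence of $Q$. Then $Q/\alpha$ is simply connected.
   Context: A quandle is a set $Q$ with a binary operation $*$ such that every left translation $L_x:y\mapsto x*y$ is bijective, $x*(y*z)=(x*y)*(x*z)$ and $x*x=x$; left division is $x\backslash y=L_x^{-1}(y)$. $Q$ is latin if every right translation $y\mapsto y*x$ is bijective, and connected if $\langle L_x:x\in Q\rangle$ is transitive. A congruence is an equivalence relation compatible with $*$ and $\backslash$; $Q/\alpha$ is the quotient quandle. For a set $S$, a quandle cocycle with values in $\mathrm{Sym}_S$ is $\theta:Q\times Q\to\mathrm{Sym}_S$ with $\theta_{x*y,x*z}\theta_{x,z}=\theta_{x,y*z}\theta_{y,z}$ and $\theta_{x,x}=1$; it is cohomologous to the trivial cocycle if there is $\gamma:Q\to\mathrm{Sym}_S$ with $\theta_{x,y}=\gamma_{x*y}\gamma_y^{-1}$ for all $x,y$. $Q$ is simply connected if it is connected and, for every set $S$, every such cocycle is cohomologous to the trivial cocycle. *)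

(* Defs.v *)
From mathcomp Require Import all_boot.
Set Implicit Arguments. Unset Strict Implicit. Unset Printing Implicit Defensive.

Section Quandles.
Variable T : Type.
Variable op : T -> T -> T.   (* op x y = x * y, left translation L_x = op x *)

Definition is_quandle : Prop :=
  [/\ (forall x, bijective (op x)),
      (forall x y z, op x (op y z) = op (op x y) (op x z)) &
      (forall x, op x x = x)].

Definition is_latin : Prop := forall x, bijective (fun y => op y x).

(* b lies in the orbit of a under the group generated by the L_x
   (closed under L_x and under L_x^{-1}) *)
Inductive lreach (a : T) : T -> Prop :=
  | lr_refl : lreach a a
  | lr_L x b : lreach a b -> lreach a (op x b)
  | lr_Linv x b : lreach a (op x b) -> lreach a b.

Definition is_connected : Prop := forall a b, lreach a b.

(* quandle cocycle with values in Sym_S; composition right-to-left *)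
Definition is_cocycle (S : Type) (theta : T -> T -> S -> S) : Prop :=
  [/\ (forall x y, bijective (theta x y)),
      (forall x y z s,
          theta (op x y) (op x z) (theta x z s) = theta x (op y z) (theta y z s)) &
      (forall x s, theta x x s = s)].

(* theta_{x,y} = gamma_{x*y} gamma_y^{-1}, i.e. theta_{x,y} gamma_y = gamma_{x*y} *)
Definition cohomologous_trivial (S : Type) (theta : T -> T -> S -> S) : Prop :=
  exists gamma : T -> S -> S,
    (forall x, bijective (gamma x)) /\
    (forall x y s, theta x y (gamma y s) = gamma (op x y) s).

Definition simply_connected : Prop :=
  is_connected /\
  forall (S : Type) (theta : T -> T -> S -> S),
    is_cocycle theta -> cohomologous_trivial theta.

End Quandles.

Section Congruence.
Variable Q : finType.
Variable op : Q -> Q -> Q.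

(* congruence: equivalence relation compatible with * and with left division
   (compatibility with \ written via y = x \ (x*y)) *)
Definition is_congruence (a : rel Q) : Prop :=
  [/\ (forall x, a x x), (forall x y, a x y -> a y x),
      (forall x y z, a x y -> a y z -> a x z),
      (forall x x' y y', a x x' -> a y y' -> a (op x y) (op x' y')) &
      (forall x x' y y', a x x' -> a (op x y) (op x' y') -> a y y')].

(* quotient Q/a: carrier = canonical representatives of the classes *)
Definition qcanon (a : rel Q) (x : Q) : Q := odflt x [pick y | a x y].

Definition qcarrier (a : rel Q) := {x : Q | qcanon a x == x}.

Definition qop (a : rel Q) (u v : qcarrier a) : qcarrier a :=
  insubd u (qcanon a (op (val u) (val v))).

End Congruence.
Arguments qop [Q] op a u v.

(* Main.v *)
Require Import Defs.
From mathcomp Require Import all_boot.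
Set Implicit Arguments. Unset Strict Implicit.

Section Aux.
Variables (Q : finType) (op : Q -> Q -> Q) (a : rel Q).
Hypothesis Ha : is_congruence op a.

Lemma qc_rel x : a x (qcanon a x).
Proof.
case: Ha => R _ _ _ _; rewrite /qcanon; case: pickP => [y /= -> //|/(_ x)].
by rewrite R.
Qed.

Lemma qc_eq x y : a x y -> qcanon a x = qcanon a y.
Proof.
case: Ha => R S T _ _ axy; rewrite /qcanon.
have E : (fun z => a x z) =1 (fun z => a y z).
  move=> z; apply/idP/idP => h; [exact: T (S _ _ axy) h | exact: T axy h].
have -> : [pick z | a x z] = [pick z | a y z] := eq_pick E.
by case: pickP => [//|/(_ y)]; rewrite R.
Qed.

Lemma qc_idem x : qcanon a (qcanon a x) = qcanon a x.
Proof. by rewrite -(qc_eq (qc_rel x)). Qed.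

Definition qpi (x : Q) : qcarrier a := exist _ (qcanon a x) (introT eqP (qc_idem x)).

Lemma qpi_val (u : qcarrier a) : qpi (val u) = u.
Proof. apply: val_inj => /=; case: u => x /= /eqP //. Qed.

Lemma qpi_morph x y : qpi (op x y) = qop op a (qpi x) (qpi y).
Proof.
case: Ha => R S T C _.
apply: val_inj; rewrite /qop /= val_insubd qc_idem /=.
rewrite eqxx; apply: qc_eq; apply: C; exact: qc_rel.
Qed.

Lemma qpi_eq x y : a x y -> qpi x = qpi y.
Proof. by move=> h; apply: val_inj => /=; apply: qc_eq. Qed.

End Aux.

Theorem proposition3p7 (Q : finType) (op : Q -> Q -> Q) (a : rel Q) :
  is_quandle op -> is_latin op -> simply_connected op ->
  is_congruence op a ->
  simply_connected (qop op a).
Proof.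
move=> Hq Hl [Hc Hsc] Ha.
have HaC := Ha; case: HaC => R Sy Tr Cp _.
split.
  move=> u v; rewrite -(qpi_val Ha u) -(qpi_val Ha v).
  elim: (Hc (val u) (val v)) => [|x b _ IH|x b _ IH].
  - exact: lr_refl.
  - by rewrite (qpi_morph Ha); apply: lr_L.
  - by apply: (lr_Linv (x := qpi Ha x)); rewrite -(qpi_morph Ha).
move=> S theta [Tb Tc T1].
pose th (x y : Q) := theta (qpi Ha x) (qpi Ha y).
have : is_cocycle op th.
  split.
  - by move=> x y; apply: Tb.
  - by move=> x y z s; rewrite /th !(qpi_morph Ha) Tc.
  - by move=> x s; rewrite /th T1.
case/Hsc => gamma [Gb Ge].
have G1 : forall y y', a y y' -> gamma (op y y') =1 gamma y'.
  move=> y y' h s.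
  rewrite -Ge /th (qpi_eq Ha h) T1 //.
have Gc : forall y' z, a y' z -> gamma z =1 gamma y'.
  move=> y' z hz.
  pose C := [set w | a y' w].
  have inj : injective (fun w => op w y').
    by case: (Hl y') => g g1 _; apply: can_inj g1.
  have sub : [set op w y' | w in C] \subset C.
    apply/subsetP => t /imsetP [w]; rewrite !inE => hw ->.
    have := Cp _ _ _ _ hw (R y'); case: Hq => _ _ ->.
    by move=> h.
  have eqC : [set op w y' | w in C] = C.
    by apply/eqP; rewrite eqEcard sub (card_imset _ inj) leqnn.
  have : z \in C by rewrite inE.
  rewrite -eqC => /imsetP [w]; rewrite inE => hw ->.
  by apply: G1; apply: Sy.
exists (fun u => gamma (val u)); split.
  by move=> u; apply: Gb.
move=> u v s.
have := Ge (val u) (val v) s.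
rewrite /th !(qpi_val Ha) => ->.
rewrite /qop val_insubd.
have hc := qc_idem Ha (op (val u) (val v)).
rewrite hc /=.
rewrite eqxx; symmetry; apply: (Gc _ _ (qc_rel Ha _)).
Qed.
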